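(* Let $G$ be a finite directed graph with vertex set $V$, edge set $E$ and signed incidence matrix $M$, and let $H\subseteq E$. Suppose that for every $e\in H$ there exists $z_e\in\mathbb Z_{\ge0}^E$ supported in $H$ with $e+z_e\in\operatorname{Row}(M)\cap\mathbb Z^E$. Then there is an ordered partition $V=V_1\sqcup\dots\sqcup V_s$ with respect to which $H$ is a cut subgraph and the orientation of $H$ induced from $G$ is coherent acyclic.
   Context: The signed incidence matrix has rows indexed by vertices and columns by edges, with entry $-1$ if $e$ points away from $v$, $+1$ if $e$ points towards $v$, and $0$ if $e$ is a loop or not incident to $v$; $\mathbb R^E$ has standard basis $\{e\}_{e\in E}$. A subset $H\subseteq E$ is a cut subgraph with respect to an ordered partition $V=V_1\sqcup\dots\sqcup V_s$ if the edges of $H$ are exactly the edges of $G$ whose endpoints lie in different parts. The orientation of $H$ is coherent acyclic (with respect to the partition) if every edge $(u,v)\in H$ has $u\in V_i$, $v\in V_j$ with $i<j$. *)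

(* Defs.v *)
From mathcomp Require Import all_boot all_order all_algebra.
Set Implicit Arguments. Unset Strict Implicit. Unset Printing Implicit Defensive.
Import Order.TTheory GRing.Theory Num.Theory.
Local Open Scope ring_scope.

(* A finite directed graph: finite vertex type V, finite edge type E,
   each edge e goes from [src e] to [tgt e] (loops and parallel edges allowed). *)

Definition incidence (V E : finType) (src tgt : E -> V) (v : V) (e : E) : int :=
  if src e == tgt e then 0
  else if src e == v then -1
  else if tgt e == v then 1
  else 0.

(* x : Z^E lies in the row space of M (over Q; rational = real row space on Z^E). *)
Definition in_row_space (V E : finType) (src tgt : E -> V) (x : E -> int) : Prop :=
  exists y : V -> rat,
    forall e : E, (x e)%:~R = \sum_(v : V) y v * (incidence src tgt v e)%:~R.

Definition basis_vec (E : finType) (e : E) : E -> int := fun f => (f == e)%:R.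

(* H is a cut subgraph w.r.t. the ordered partition given by p : V -> 'I_s
   (V_i = p^-1(i)) *)
Definition is_cut_subgraph (V E : finType) (src tgt : E -> V) (H : {set E})
  (s : nat) (p : V -> 'I_s) : Prop :=
  forall e : E, e \in H <-> p (src e) != p (tgt e).

Definition coherent_acyclic (V E : finType) (src tgt : E -> V) (H : {set E})
  (s : nat) (p : V -> 'I_s) : Prop :=
  forall e : E, e \in H -> (p (src e) < p (tgt e))%N.

(* Main.v *)
Require Import Defs.
From mathcomp Require Import all_boot all_order all_algebra.
Import Order.TTheory GRing.Theory Num.Theory.
Local Open Scope ring_scope.
Set Implicit Arguments. Unset Strict Implicit.

Lemma incE (V E : finType) (src tgt : E -> V) v e :
  ((incidence src tgt v e)%:~R : rat) = (v == tgt e)%:R - (v == src e)%:R.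
Proof.
rewrite /incidence.
have [st|nst] := eqVneq (src e) (tgt e).
  by rewrite st subrr.
have [sv|nsv] := eqVneq (src e) v.
  by rewrite -sv (negbTE nst) sub0r.
rewrite subr0.
by have [tv|ntv] := eqVneq (tgt e) v; rewrite ?tv // eq_sym ?(negbTE ntv).
Qed.

Lemma sumE (V : finType) (y : V -> rat) (a : V) :
  \sum_(v : V) y v * (v == a)%:R = y a.
Proof.
under eq_bigr => v _ do rewrite mulr_natr mulrb.
by rewrite -big_mkcond big_pred1_eq.
Qed.

Lemma potE (V E : finType) (src tgt : E -> V) (y : V -> rat) e :
  \sum_(v : V) y v * (incidence src tgt v e)%:~R = y (tgt e) - y (src e).
Proof.
under eq_bigr => v _ do rewrite incE mulrBr.
by rewrite sumrB !sumE.
Qed.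

Lemma build (V E : finType) (src tgt : E -> V) (H : {set E}) :
  (forall e : E, e \in H ->
     exists z : E -> nat,
       (forall f : E, f \notin H -> z f = 0%N) /\
       in_row_space src tgt (fun f => basis_vec e f + (z f)%:Z)) ->
  forall s : seq E, all (mem H) s ->
  exists Y : V -> rat,
    (forall f, f \notin H -> Y (tgt f) = Y (src f)) /\
    (forall f, f \in H -> Y (src f) <= Y (tgt f)) /\
    (forall f, f \in s -> Y (src f) < Y (tgt f)).
Proof.
move=> hyp; elim=> [|e s IH] /=.
  by move=> _; exists (fun _ => 0); split=> // f _; split.
case/andP=> eH sH; have [Y [Y1 [Y2 Y3]]] := IH sH.
have [z [z0 [y hy]]] := hyp e eH.
have D f : y (tgt f) - y (src f) = (f == e)%:R + (z f)%:R.
  by rewrite -(potE src tgt y f) -hy /basis_vec intrD; case: (f == e).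
exists (fun v => Y v + y v); split; [|split].
- move=> f fH; have := D f; rewrite z0 //.
  have -> : (f == e) = false by apply/negbTE; apply: contraNneq fH => ->.
  rewrite addr0 => /eqP; rewrite subr_eq0 => /eqP ->; by rewrite Y1.
- move=> f fH; apply: lerD; first exact: Y2.
  by rewrite -subr_ge0 D addr_ge0.
- move=> f; rewrite in_cons => /orP [/eqP ->|fs].
    apply: ler_ltD; first exact: Y2.
    rewrite -subr_gt0 D eqxx; apply: (@lt_le_trans _ _ 1) => //.
    by rewrite lerDl.
  apply: ltr_leD; first exact: Y3.
  have fH : f \in H by move/allP: sH => /(_ f fs).
  by rewrite -subr_ge0 D addr_ge0.
Qed.

Lemma count_strict (T : eqType) (a b : pred T) (s : seq T) x :
  subpred a b -> x \in s -> b x -> ~~ a x -> (count a s < count b s)%N.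
Proof.
move=> sab; elim: s => [//|y s IH]; rewrite in_cons => /orP [/eqP <-|xs] bx nax /=.
  by rewrite (negbTE nax) bx add0n add1n ltnS sub_count.
have := IH xs bx nax; have := sab y.
by case: (a y); case: (b y) => //= H1 h; rewrite ?add0n ?add1n ?ltnS //; [ have := H1 isT | exact: ltnW ].
Qed.

Theorem mainTheorem20 (V E : finType) (src tgt : E -> V) (H : {set E}) :
  (forall e : E, e \in H ->
     exists z : E -> nat,
       (forall f : E, f \notin H -> z f = 0%N) /\
       in_row_space src tgt (fun f => basis_vec e f + (z f)%:Z)) ->
  exists (s : nat) (p : V -> 'I_s),
    (forall i : 'I_s, exists v : V, p v = i) /\
    is_cut_subgraph src tgt H p /\
    coherent_acyclic src tgt H p.
Proof.
move=> hyp.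
have hall : all (mem H) (enum H) by apply/allP => f; rewrite mem_enum.
have [Y [Y1 [_ Y3]]] := build hyp hall.
have Y4 f : f \in H -> Y (src f) < Y (tgt f) by move=> fH; apply: Y3; rewrite mem_enum.
pose vals := undup [seq Y v | v <- enum V].
pose rk (q : rat) := count (fun r => r < q) vals.
have rk_lt q : q \in vals -> (rk q < size vals)%N.
  move=> qv; rewrite /rk -(count_predC (fun r => r < q) vals) -{1}(addn0 (count _ _)).
  rewrite ltn_add2l -has_count; apply/hasP; exists q => //=; by rewrite ltxx.
have Yv v : Y v \in vals by rewrite mem_undup; apply: map_f; rewrite mem_enum.
have rk_mono q1 q2 : q1 \in vals -> q1 < q2 -> (rk q1 < rk q2)%N.
  move=> q1v lt12; apply: (count_strict (x := q1)) => //=; last by rewrite ltxx.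
  by move=> r /= h; apply: lt_trans h lt12.
pose p v := Ordinal (rk_lt _ (Yv v)).
exists (size vals), p; split; [|split].
- pose g (i : 'I_(size vals)) : 'I_(size vals) := Ordinal (rk_lt _ (mem_nth 0 (ltn_ord i))).
  have ginj : injective g.
    move=> i j /(congr1 val) /= hij; apply/val_inj/eqP => /=.
    rewrite -(nth_uniq 0 (ltn_ord i) (ltn_ord j) (undup_uniq _)).
    apply/negPn/negP => hne.
    case: (ltgtP (nth 0 vals i) (nth 0 vals j)) hne => // h _.
      by move: (rk_mono _ _ (mem_nth 0 (ltn_ord i)) h); rewrite hij ltnn.
    by move: (rk_mono _ _ (mem_nth 0 (ltn_ord j)) h); rewrite hij ltnn.
  have [ginv _ gK] := injF_bij ginj.
  move=> i; have := mem_nth 0 (ltn_ord (ginv i)).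
  rewrite mem_undup => /mapP [v _ hv]; exists v.
  apply: val_inj => /=; rewrite -hv.
  by have := congr1 val (gK i).
- move=> f; split.
    by move=> fH; rewrite -(inj_eq val_inj) /= neq_ltn (rk_mono _ _ (Yv _) (Y4 f fH)).
  apply: contraTT => fH; rewrite -(inj_eq val_inj) /= Y1 ?eqxx //.
- by move=> f fH; apply: rk_mono _ _ (Yv _) (Y4 f fH).
Qed.
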